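(* Let $(X,d)$ be a compact metric space with $\dim X=0$. Then the identity map $\mathrm{id}_X$ is topologically stable.
   Context: $\mathcal{H}(X)$ is the set of homeomorphisms; $d_{C^0}(f,g)=\sup_x d(f(x),g(x))$; $D(f,g)=\max\{d_{C^0}(f,g),d_{C^0}(f^{-1},g^{-1})\}$. $f\in\mathcal{H}(X)$ is topologically stable if for every $\epsilon>0$ there is $\delta>0$ such that every $g\in\mathcal{H}(X)$ with $D(f,g)<\delta$ admits a continuous $h:X\to X$ with $d_{C^0}(h,\mathrm{id}_X)<\epsilon$ and $h\circ g=f\circ h$. *)

(* Defs.v *)
From Stdlib Require Import Reals List.
Open Scope R_scope.

Definition is_metric {X : Type} (d : X -> X -> R) : Prop :=
  (forall x y, 0 <= d x y) /\
  (forall x y, d x y = 0 <-> x = y) /\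
  (forall x y, d x y = d y x) /\
  (forall x y z, d x z <= d x y + d y z).

Definition ball {X : Type} (d : X -> X -> R) (x : X) (r : R) : X -> Prop :=
  fun y => d x y < r.

Definition is_open {X : Type} (d : X -> X -> R) (U : X -> Prop) : Prop :=
  forall x, U x -> exists r, 0 < r /\ forall y, ball d x r y -> U y.

Definition is_compact_metric {X : Type} (d : X -> X -> R) : Prop :=
  forall (I : Type) (U : I -> X -> Prop),
    (forall i, is_open d (U i)) ->
    (forall x, exists i, U i x) ->
    exists l : list I, forall x, exists i, In i l /\ U i x.

(** Lebesgue covering dimension 0: X is nonempty and every finite open cover
    has a finite open refinement which covers X and whose members are pairwise
    disjoint (order 0). *)
Definition covering_dim_zero {X : Type} (d : X -> X -> R) : Prop :=
  inhabited X /\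
  forall (U : list (X -> Prop)),
    (forall u, In u U -> is_open d u) ->
    (forall x, exists u, In u U /\ u x) ->
    exists V : list (X -> Prop),
      (forall v, In v V -> is_open d v) /\
      (forall x, exists v, In v V /\ v x) /\
      (forall v, In v V -> exists u, In u U /\ forall x, v x -> u x) /\
      (forall (i j : nat) (vi vj : X -> Prop),
          nth_error V i = Some vi -> nth_error V j = Some vj -> i <> j ->
          forall x, ~ (vi x /\ vj x)).

Definition is_continuous_map {X : Type} (d : X -> X -> R) (f : X -> X) : Prop :=
  forall x eps, 0 < eps -> exists delta, 0 < delta /\
    forall y, d x y < delta -> d (f x) (f y) < eps.

Definition is_homeo {X : Type} (d : X -> X -> R) (f finv : X -> X) : Prop :=
  is_continuous_map d f /\ is_continuous_map d finv /\
  (forall x, finv (f x) = x) /\ (forall x, f (finv x) = x).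

Definition is_dC0 {X : Type} (d : X -> X -> R) (f g : X -> X) (r : R) : Prop :=
  is_lub (fun y => exists x, y = d (f x) (g x)) r.

Definition dC0_lt {X : Type} (d : X -> X -> R) (f g : X -> X) (e : R) : Prop :=
  exists r, is_dC0 d f g r /\ r < e.

Definition D_lt {X : Type} (d : X -> X -> R) (f finv g ginv : X -> X) (e : R) : Prop :=
  exists r1 r2, is_dC0 d f g r1 /\ is_dC0 d finv ginv r2 /\ Rmax r1 r2 < e.

Definition topologically_stable {X : Type} (d : X -> X -> R) (f finv : X -> X) : Prop :=
  forall eps, 0 < eps -> exists delta, 0 < delta /\
    forall g ginv, is_homeo d g ginv -> D_lt d f finv g ginv delta ->
      exists h : X -> X, is_continuous_map d h /\ dC0_lt d h (fun x => x) eps /\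
        forall x, h (g x) = f (h x).

(* Main.v *)
Require Import Defs.
From Stdlib Require Import Reals List Lra ClassicalEpsilon.
Open Scope R_scope.

Section Aux.
Variable X : Type.
Variable inh : inhabited X.

Definition rep (v : X -> Prop) : X := epsilon inh v.

Fixpoint find_rep (l : list (X -> Prop)) (x : X) : X :=
  match l with
  | nil => x
  | w :: l' => if excluded_middle_informative (w x) then rep w else find_rep l' x
  end.

Definition Disj (l : list (X -> Prop)) := forall (i j : nat) (vi vj : X -> Prop),
  nth_error l i = Some vi -> nth_error l j = Some vj -> i <> j ->
  forall x, ~ (vi x /\ vj x).

Lemma find_rep_spec : forall l, Disj l -> forall x i v, nth_error l i = Some v -> v x ->
  find_rep l x = rep v.
Proof.
  induction l as [|w l IH]; intros HD x i v Hi Hv.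
  - destruct i; discriminate.
  - simpl. destruct (excluded_middle_informative (w x)) as [Hw|Hw].
    + destruct i as [|k].
      * simpl in Hi; injection Hi as ->; reflexivity.
      * exfalso. apply (HD 0%nat (S k) w v eq_refl Hi ltac:(discriminate) x); auto.
    + destruct i as [|k].
      * simpl in Hi; injection Hi as ->; contradiction.
      * apply (IH) with k; auto.
        intros a b va vb Ha Hb Hab. apply (HD (S a) (S b)); simpl; auto.
Qed.
End Aux.


Fixpoint mindelta {X : Type} (l : list (X * R)) : R :=
  match l with
  | nil => 1
  | p :: l' => if Rlt_dec 0 (snd p) then Rmin (snd p) (mindelta l') else mindelta l'
  end.

Lemma mindelta_pos {X : Type} (l : list (X * R)) : 0 < mindelta l.
Proof.
  induction l as [|p l IH]; simpl; [lra|].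
  destruct (Rlt_dec 0 (snd p)); auto. apply Rmin_glb_lt; auto.
Qed.

Lemma mindelta_le {X : Type} (l : list (X * R)) p : In p l -> 0 < snd p -> mindelta l <= snd p.
Proof.
  induction l as [|q l IH]; simpl; [tauto|].
  intros [->|H] Hp.
  - destruct (Rlt_dec 0 (snd p)); [apply Rmin_l| contradiction].
  - destruct (Rlt_dec 0 (snd q)); [|auto].
    eapply Rle_trans; [apply Rmin_r| auto].
Qed.

Theorem corollary1p4 (X : Type) (d : X -> X -> R)
  (Hmetric : is_metric d) (Hcompact : is_compact_metric d) (Hdim : covering_dim_zero d) :
  topologically_stable d (fun x => x) (fun x => x).
Proof.
  destruct Hmetric as [Hpos [Hzero [Hsym Htri]]].
  destruct Hdim as [inh Hdim].
  assert (Hd0 : forall x, d x x = 0) by (intro; apply Hzero; reflexivity).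
  assert (Hball : forall c r, is_open d (ball d c r)).
  { intros c r y Hy. unfold ball in *. exists (r - d c y). split; [lra|].
    intros z Hz. unfold ball in Hz. specialize (Htri c y z). lra. }
  intros eps Heps.
  destruct (Hcompact X (fun c => ball d c (eps/4)) (fun c => Hball c _)) as [lc Hlc].
  { intro x. exists x. unfold ball. rewrite Hd0. lra. }
  destruct (Hdim (map (fun c => ball d c (eps/4)) lc)) as [V [HVo [HVc [HVr HVd]]]].
  { intros u Hu. apply in_map_iff in Hu. destruct Hu as [c [<- _]]. apply Hball. }
  { intro x. destruct (Hlc x) as [c [Hc Hx]]. exists (ball d c (eps/4)).
    split; auto. apply in_map_iff. eauto. }
  set (U := fun (p : X * R) (y : X) => (0 < snd p) /\
        ((exists v, In v V /\ (forall z, d (fst p) z < 2 * snd p -> v z)) /\ (d (fst p) y < snd p))).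
  destruct (Hcompact (X * R)%type U) as [lp Hlp].
  { intros [c r] y [Hr [Hv Hy]]. simpl in *. exists (r - d c y). split; [lra|].
    intros z Hz. unfold ball in Hz. unfold U; simpl. split; [auto|split; [auto|]].
    specialize (Htri c y z). lra. }
  { intro x. destruct (HVc x) as [v [Hv Hx]]. destruct (HVo v Hv x Hx) as [r [Hr Hb]].
    exists (x, r/2). unfold U; simpl. split; [lra|]. split.
    - exists v. split; auto. intros z Hz. apply Hb. unfold ball. lra.
    - rewrite Hd0. lra. }
  exists (mindelta lp). split; [apply mindelta_pos|].
  intros g ginv _ [r1 [r2 [Hr1 [_ Hmax]]]].
  assert (Hg : forall x, d x (g x) < mindelta lp).
  { intro x. assert (d x (g x) <= r1) by (apply (proj1 Hr1); exists x; reflexivity).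
    pose proof (Rmax_l r1 r2). lra. }
  assert (HD : Disj X V) by (intros i j vi vj Hi Hj Hij; eapply HVd; eauto).
  set (h := find_rep X inh V).
  assert (Hh : forall x v, In v V -> v x -> h x = rep X inh v).
  { intros x v Hv Hx. destruct (In_nth_error _ _ Hv) as [i Hi].
    eapply find_rep_spec; eauto. }
  assert (Hrep : forall x v, v x -> v (rep X inh v)).
  { intros x v Hx. unfold rep. apply epsilon_spec. eauto. }
  exists h. split; [|split].
  - intros x e He. destruct (HVc x) as [v [Hv Hx]]. destruct (HVo v Hv x Hx) as [r [Hr Hb]].
    exists r. split; auto. intros y Hy. rewrite (Hh x v Hv Hx), (Hh y v Hv (Hb y Hy)).
    rewrite Hd0. auto.
  - assert (Hbnd : forall x, d (h x) x < eps / 2).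
    { intro x. destruct (HVc x) as [v [Hv Hx]]. rewrite (Hh x v Hv Hx).
      destruct (HVr v Hv) as [u [Hu Hvu]]. apply in_map_iff in Hu.
      destruct Hu as [c [<- _]]. pose proof (Hvu _ Hx) as H1. pose proof (Hvu _ (Hrep _ _ Hx)) as H2.
      unfold ball in *. pose proof (Htri (rep X inh v) c x). rewrite Hsym in H2. lra. }
    destruct (completeness (fun y => exists x, y = d (h x) x)) as [m Hm].
    { exists (eps/2). intros y [x ->]. left. apply Hbnd. }
    { destruct inh as [x0]. exists (d (h x0) x0). eauto. }
    exists m. split; [exact Hm|].
    assert (m <= eps/2).
    { apply (proj2 Hm). intros y [x ->]. left. apply Hbnd. }
    lra.
  - intro y. destruct (Hlp y) as [[c r] [Hin [Hr [[v [Hv Hvb]] Hy]]]]. simpl in *.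
    pose proof (mindelta_le lp (c, r) Hin Hr) as Hle. simpl in Hle.
    rewrite (Hh y v Hv (Hvb y ltac:(lra))).
    apply (Hh (g y) v Hv). apply Hvb. pose proof (Htri c y (g y)). pose proof (Hg y). lra.
Qed.
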